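(* Let $d\in\mathbb N$, $\varepsilon\in(0,1)$, and consider Thiémard's decomposition process of $[0,1)^d$ described in the context. Let $P$ be a box generated in the process that is decomposed via DECOMPOSE$(P,j)$ for some type $j\in\{1,\dots,d\}$, and assume $\delta^P W(P)>\varepsilon$. Then for every $i\in\{j,\dots,d\}$ the child $Q^P_i$ (of type $i$) is itself decomposed, and $$\delta^{Q_i^P}=\left(\frac{W(P)-\varepsilon/\delta^P}{W(P)-\varepsilon}\right)^{\frac{1}{d-i+1}}\delta^P .$$ Moreover, the right-hand side, viewed as the function $g(\delta,w,i)=\big(\frac{w-\varepsilon/\delta}{w-\varepsilon}\big)^{1/(d-i+1)}\delta$ on the domain $\delta\in(0,1)$, $w>\varepsilon/\delta$, $i\in\{1,\dots,d\}$, is strictly increasing in $\delta$, strictly increasing in $w$, and strictly decreasing in $i$.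
   Context: Fix $d\in\mathbb N$ and $\varepsilon\in(0,1]$. For $x,y\in[0,1]^d$ write $[x,y)=\prod_{i=1}^d[x_i,y_i)$ and define the weight $W([x,y))=\prod_{i=1}^d y_i-\prod_{i=1}^d x_i$. Thiémard's decomposition process generates boxes, each with a type in $\{1,\dots,d+1\}$. It starts with $I^d=[0,1)^d=[(0,\dots,0),(1,\dots,1))$, of type $1$. Whenever a generated box $P=[\alpha,\beta)$ has type $j\le d$ and $W(P)>\varepsilon$, it is decomposed (procedure DECOMPOSE$(P,j)$) as follows: put $$\delta^P=\left(\frac{\prod_{i=1}^d\beta_i-\varepsilon}{\prod_{i=1}^{j-1}\alpha_i\prod_{i=j}^d\beta_i}\right)^{1/(d-j+1)},\qquad \gamma^P_i=\alpha_i\ (i<j),\quad \gamma^P_i=\delta^P\beta_i\ (i\ge j).$$ The children of $P$ are the boxes $Q^P_k=[a^{(k)},b^{(k)})$ for $k=j,\dots,d$, where $a^{(k)}_i=\gamma^P_i$ for $i<k$, $a^{(k)}_i=\alpha_i$ for $i\ge k$, $b^{(k)}_k=\gamma^P_k$, $b^{(k)}_i=\beta_i$ for $i\neq k$; the box $Q^P_k$ has type $k$. In addition $P$ has the child $Q^P_{d+1}=[\gamma^P,\beta)$ of type $d+1$. A generated box of type $d+1$ or of weight at most $\varepsilon$ is not decomposed. (Known facts from Thiémard: $\delta^P\in(0,1)$; the process terminates after finitely many steps; $W(Q^P_{d+1})=\varepsilon$ and $W(Q^P_k)=\delta^PW(P)$ for $j\le k\le d$.) *)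

(* Defs.v *)
From HB Require Import structures.
From mathcomp Require Import all_boot all_order all_algebra.
From mathcomp Require Import reals exp.
Set Implicit Arguments. Unset Strict Implicit. Unset Printing Implicit Defensive.
Import Order.TTheory GRing.Theory Num.Theory.
Local Open Scope ring_scope.

(* Points of [0,1]^d are functions nat -> R; only coordinates 1..d are used
   (1-based indexing as in the paper).  A box [x,y) is the pair (x,y). *)
Definition point (R : realType) := nat -> R.
Definition box (R : realType) := (point R * point R)%type.

Section Thiemard.
Variables (R : realType) (d : nat) (eps : R).

Definition vol (x : point R) : R := \prod_(1 <= i < d.+1) x i.

Definition W (P : box R) : R := vol P.2 - vol P.1.

Definition delta (P : box R) (j : nat) : R :=
  ((vol P.2 - eps) /
     ((\prod_(1 <= i < j) P.1 i) * (\prod_(j <= i < d.+1) P.2 i)))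
  `^ (1 / (d.+1 - j)%:R).

Definition gamma (P : box R) (j : nat) : point R :=
  fun i => if (i < j)%N then P.1 i else delta P j * P.2 i.

Definition child (P : box R) (j k : nat) : box R :=
  if (k <= d)%N then
    ((fun i => if (i < k)%N then gamma P j i else P.1 i),
     (fun i => if i == k then gamma P j k else P.2 i))
  else (gamma P j, P.2).

Inductive generated : box R -> nat -> Prop :=
| gen_init : generated (fun _ => 0, fun _ => 1) 1
| gen_child : forall P j k, generated P j -> (j <= d)%N -> eps < W P ->
    (j <= k <= d.+1)%N -> generated (child P j k) k.

Definition decomposed (P : box R) (j : nat) : Prop :=
  [/\ generated P j, (1 <= j <= d)%N & eps < W P].

Definition g (dl w : R) (i : nat) : R :=
  ((w - eps / dl) / (w - eps)) `^ (1 / (d.+1 - i)%:R) * dl.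

End Thiemard.

(* Main.v *)
Require Import Defs.
From HB Require Import structures.
From mathcomp Require Import all_boot all_order all_algebra.
From mathcomp Require Import reals exp.
From mathcomp Require Import ring lra.
Import Order.TTheory GRing.Theory Num.Theory.
Local Open Scope ring_scope.
Set Implicit Arguments. Unset Strict Implicit.

Section Helpers.
Variable R : realType.

Lemma prod_nat_gt0 (m n : nat) (F : nat -> R) :
  (forall i, (m <= i < n)%N -> 0 < F i) -> 0 < \prod_(m <= i < n) F i.
Proof.
move=> H; rewrite big_nat_cond; apply: prodr_gt0 => i /andP[hi _]; exact: H.
Qed.

Lemma prod_nat_eq0 (m n k : nat) (F : nat -> R) :
  (m <= k < n)%N -> F k = 0 -> \prod_(m <= i < n) F i = 0.
Proof.
move=> /andP[h1 h2] Fk.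
rewrite (big_cat_nat (n:=k)) //=; last exact: ltnW.
by rewrite [X in _ * X]big_ltn // Fk mul0r mulr0.
Qed.

Lemma prod_nat_upd (m n k : nat) (F G : nat -> R) (c : R) :
  (m <= k < n)%N -> G k = c * F k -> (forall i, i != k -> G i = F i) ->
  \prod_(m <= i < n) G i = c * \prod_(m <= i < n) F i.
Proof.
move=> /andP[h1 h2] Gk Go.
rewrite (big_cat_nat (n:=k)) //=; last exact: ltnW.
rewrite [X in _ = c * X](big_cat_nat (n:=k)) //=; last exact: ltnW.
rewrite [X in _ * X = _]big_ltn // [X in _ = _ * (_ * X)]big_ltn // Gk.
rewrite (eq_big_nat _ _ (F2 := F) (m:=m)); last first.
  by move=> i /andP[_ hi]; apply: Go; rewrite ltn_eqF.
rewrite (eq_big_nat _ _ (F2 := F) (m:=k.+1)); last first.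
  by move=> i /andP[hi _]; apply: Go; rewrite gtn_eqF.
by rewrite -!mulrA mulrCA.
Qed.

Lemma powR_root (x y : R) (m : nat) : 0 <= x -> 0 <= y -> (0 < m)%N ->
  (x * y ^+ m) `^ (1 / m%:R) = x `^ (1 / m%:R) * y.
Proof.
move=> hx hy hm; rewrite powRM ?exprn_ge0 //; congr (_ * _).
rewrite -powR_mulrn // -powRrM mul1r mulfV ?powRr1 //.
by rewrite pnatr_eq0 -lt0n.
Qed.

Lemma powR_unroot (c : R) (m : nat) : 0 <= c -> (0 < m)%N ->
  (c `^ (1 / m%:R)) ^+ m = c.
Proof.
move=> hc hm; rewrite -powR_mulrn ?powR_ge0 // -powRrM mul1r mulVf ?powRr1 //.
by rewrite pnatr_eq0 -lt0n.
Qed.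

End Helpers.
Section Proc.
Variables (R : realType) (d : nat) (eps : R).

Definition inv (P : box R) (j : nat) : Prop :=
  [/\ forall i, (1 <= i < j)%N -> 0 < P.1 i,
      forall i, (j <= i <= d)%N -> P.1 i = 0 &
      forall i, (1 <= i <= d)%N -> 0 < P.2 i].

Lemma vol1_eq0 P j : (1 <= j <= d)%N -> inv P j -> vol d P.1 = 0.
Proof.
move=> /andP[h1 h2] [_ H0 _]; apply: (@prod_nat_eq0 _ 1 d.+1 j).
  by rewrite h1 ltnS.
by apply: H0; rewrite leqnn.
Qed.

Lemma W_eq P j : (1 <= j <= d)%N -> inv P j -> W d P = vol d P.2.
Proof. by move=> hj hi; rewrite /W (vol1_eq0 hj hi) subr0. Qed.

Lemma den_gt0 P j : (1 <= j <= d)%N -> inv P j ->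
  0 < (\prod_(1 <= i < j) P.1 i) * (\prod_(j <= i < d.+1) P.2 i).
Proof.
move=> /andP[h1 h2] [Ha _ Hb]; apply: mulr_gt0; apply: prod_nat_gt0 => i /andP[a b].
  by apply: Ha; rewrite a.
apply: Hb; rewrite (leq_trans h1 a); exact: b.
Qed.

Lemma delta_gt0 P j : (1 <= j <= d)%N -> inv P j -> eps < W d P ->
  0 < delta d eps P j.
Proof.
move=> hj hi hW; apply: powR_gt0; apply: divr_gt0; last exact: den_gt0.
by rewrite subr_gt0 -(W_eq hj hi).
Qed.

Lemma child_inv P j k : (1 <= j <= d)%N -> inv P j -> eps < W d P ->
  (j <= k <= d)%N -> inv (child d eps P j k) k.
Proof.
move=> hj hi hW /andP[hjk hkd].
have dl0 := delta_gt0 hj hi hW.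
case: hi => [Ha H0 Hb].
rewrite /child hkd /gamma /=; split.
- move=> i /andP[i1 ik] /=; rewrite ik; case: ifP => ij.
    by apply: Ha; rewrite i1 ij.
  apply: mulr_gt0 => //; apply: Hb; rewrite i1 /=; exact: ltnW (leq_trans ik hkd).
- move=> i /andP[ki id] /=; rewrite ltnNge ki /=; apply: H0.
  by rewrite id (leq_trans hjk ki).
- move=> i /andP[i1 id] /=; case: eqP => [_|_]; last by apply: Hb; rewrite i1 id.
  rewrite ltnNge hjk /=; apply: mulr_gt0 => //; apply: Hb.
  by rewrite hkd (leq_trans _ hjk) //; case/andP: hj.
Qed.

Lemma gen_inv P j : generated d eps P j ->
  (1 <= j)%N /\ ((j <= d)%N -> inv P j).
Proof.
elim => [|Q j0 k _ [hj1 IH] hjd hW hk].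
  split => // _; split => //= i; first by case: i => [|[|]].
have hj : (1 <= j0 <= d)%N by rewrite hj1.
case/andP: hk => hjk hk; split; first exact: leq_trans hjk.
move=> hkd; apply: child_inv => //; first exact: IH.
by rewrite hjk.
Qed.

End Proc.
Lemma alg_id (R : realType) (V e dl A Bj Bi E Dm : R) :
  Dm * E = (V - e) / (A * (Bj * Bi)) ->
  dl != 0 -> E != 0 -> Dm != 0 -> V - e != 0 -> A != 0 -> Bj != 0 -> Bi != 0 ->
  (dl * V - e) / (A * (E * Bj) * (dl * Bi)) = (V - e / dl) / (V - e) * Dm.
Proof.
move=> h h1 h2 h3 h4 h5 h6 h7.
have hX : A * (Bj * Bi) = (V - e) / (Dm * E).
  by rewrite h; field; rewrite h4 h5 h6 h7.
have -> : A * (E * Bj) * (dl * Bi) = A * (Bj * Bi) * (E * dl) by ring.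
rewrite hX; field.
by rewrite h1 h2 h3 h4.
Qed.
Section Proc2.
Variables (R : realType) (d : nat) (eps : R).

Lemma delta_child P j i : (1 <= j <= d)%N -> inv d P j -> eps < W d P ->
  eps < delta d eps P j * W d P -> (j <= i <= d)%N ->
  delta d eps (child d eps P j i) i =
  ((W d P - eps / delta d eps P j) / (W d P - eps))
           `^ (1 / (d.+1 - i)%:R) * delta d eps P j.
Proof.
move=> hj hi hW hdW /andP[hji hid].
have dl0 := delta_gt0 hj hi hW.
have hWe := W_eq hj hi.
case/andP: hj => hj1 hjd.
have hi' := hi; case: hi' => [Ha H0 Hb].
set dl := delta d eps P j in dl0 hdW *.
set V := vol d P.2 in hWe.
have hV : eps < V by rewrite -hWe.
set A := \prod_(1 <= l < j) P.1 l.
set Bj := \prod_(j <= l < i) P.2 l.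
set Bi := \prod_(i <= l < d.+1) P.2 l.
have A0 : 0 < A by apply: prod_nat_gt0 => l hl; apply: Ha.
have Bj0 : 0 < Bj.
  apply: prod_nat_gt0 => l /andP[a b]; apply: Hb.
  by rewrite (leq_trans hj1 a) (leq_trans (ltnW b) hid).
have Bi0 : 0 < Bi.
  apply: prod_nat_gt0 => l /andP[a b]; apply: Hb.
  by rewrite (leq_trans hj1 (leq_trans hji a)); exact: b.
have hB : \prod_(j <= l < d.+1) P.2 l = Bj * Bi.
  by rewrite (big_cat_nat (n:=i)) // ltnW.
have h5 : dl ^+ (d.+1 - j) = (V - eps) / (A * (Bj * Bi)).
  rewrite /dl /delta -hB; apply: powR_unroot; last by rewrite subn_gt0.
  apply: divr_ge0; first by rewrite subr_ge0; exact: ltW hV.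
  rewrite hB; apply: mulr_ge0; [exact: ltW | apply: mulr_ge0; exact: ltW].
have hQ2 : vol d (child d eps P j i).2 = dl * V.
  apply: (@prod_nat_upd _ 1 d.+1 i); first by rewrite (leq_trans hj1 hji).
    by rewrite /child hid /= eqxx /gamma ltnNge hji.
  by move=> l hl; rewrite /child hid /= (negbTE hl).
have hQa : \prod_(1 <= l < i) (child d eps P j i).1 l = A * (dl ^+ (i - j) * Bj).
  rewrite (big_cat_nat (n:=j)) //=; congr (_ * _).
    apply: eq_big_nat => l /andP[_ b].
    by rewrite /child hid /= /gamma (leq_trans b hji) b.
  rewrite -prodr_const_nat -big_split /=.
  apply: eq_big_nat => l /andP[a b].
  by rewrite /child hid /= /gamma b ltnNge a.
have hQb : \prod_(i <= l < d.+1) (child d eps P j i).2 l = dl * Bi.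
  apply: (@prod_nat_upd _ i d.+1 i); first by rewrite leqnn.
    by rewrite /child hid /= eqxx /gamma ltnNge hji.
  by move=> l hl; rewrite /child hid /= (negbTE hl).
rewrite /delta hQ2 hQa hQb hWe.
have hm : (d.+1 - j = (d.+1 - i) + (i - j))%N.
  by rewrite addnBA // subnK // leqW.
rewrite hm exprD in h5.
rewrite (alg_id h5); last first.
- by rewrite gt_eqF.
- by rewrite gt_eqF.
- by rewrite gt_eqF.
- by rewrite subr_eq0 gt_eqF.
- by rewrite expf_neq0 // gt_eqF.
- by rewrite expf_neq0 // gt_eqF.
- by rewrite gt_eqF.
apply: powR_root; last by rewrite subn_gt0.
  apply: divr_ge0; rewrite subr_ge0 ltW //.
    by rewrite ltr_pdivrMr // mulrC -hWe.
  exact: ltW.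
Qed.

End Proc2.
Section Proc3.
Variables (R : realType) (d : nat) (eps : R).

Lemma W_child P j i : (1 <= j <= d)%N -> inv d P j -> eps < W d P ->
  (j <= i <= d)%N -> W d (child d eps P j i) = delta d eps P j * W d P.
Proof.
move=> hj hi hW hji'.
have hci := child_inv hj hi hW hji'.
case/andP: hji' => hji hid; case/andP: (hj) => hj1 hjd.
have hi1 : (1 <= i <= d)%N by rewrite hid (leq_trans hj1 hji).
rewrite (W_eq hi1 hci) (W_eq hj hi).
apply: (@prod_nat_upd _ 1 d.+1 i); first by rewrite (leq_trans hj1 hji).
  by rewrite /child hid /= eqxx /gamma ltnNge hji.
by move=> l hl; rewrite /child hid /= (negbTE hl).
Qed.

End Proc3.
Section G.
Variables (R : realType) (d : nat) (eps : R).
Hypothesis eps0 : 0 < eps.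

Lemma expo_gt0 (i : nat) : (i <= d)%N -> 0 < 1 / (d.+1 - i)%:R :> R.
Proof. by move=> h; rewrite divr_gt0 // ltr0n subn_gt0. Qed.

Lemma g_dl (dl1 dl2 w : R) (i : nat) :
  0 < dl1 -> dl1 < dl2 -> dl2 < 1 -> eps / dl1 < w -> (1 <= i <= d)%N ->
  g d eps dl1 w i < g d eps dl2 w i.
Proof.
move=> h1 h12 h2 hw /andP[_ hid].
have hdl2 : 0 < dl2 by apply: lt_trans h12.
have he1 : eps < eps / dl1 by rewrite ltr_pdivlMr // gtr_pMr // (lt_trans h12).
have hwe : 0 < w - eps by rewrite subr_gt0 (lt_trans he1).
have hd : eps / dl2 < eps / dl1 by rewrite ltr_pM2l // ltf_pV2.
have b1 : 0 < (w - eps / dl1) / (w - eps) by rewrite divr_gt0 // subr_gt0.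
have b12 : (w - eps / dl1) / (w - eps) < (w - eps / dl2) / (w - eps).
  by rewrite ltr_pM2r ?invr_gt0 // ltrD2l ltrN2.
have := gt0_ltr_powR (expo_gt0 hid) (ltW b1) (ltW (lt_trans b1 b12)) b12.
have := powR_gt0 (1 / (d.+1 - i)%:R) b1.
rewrite /g; set p1 := _ `^ _; set p2 := _ `^ _ => hp1 hp.
nra.
Qed.

Lemma g_w (dl w1 w2 : R) (i : nat) :
  0 < dl < 1 -> eps / dl < w1 -> w1 < w2 -> (1 <= i <= d)%N ->
  g d eps dl w1 i < g d eps dl w2 i.
Proof.
move=> /andP[h0 h1] hw1 hw12 /andP[_ hid].
have he1 : eps < eps / dl by rewrite ltr_pdivlMr // gtr_pMr.
have hwe1 : 0 < w1 - eps by rewrite subr_gt0 (lt_trans he1).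
have hwe2 : 0 < w2 - eps by rewrite subr_gt0 (lt_trans (lt_trans he1 hw1)).
have b1 : 0 < (w1 - eps / dl) / (w1 - eps) by rewrite divr_gt0 // subr_gt0.
have b12 : (w1 - eps / dl) / (w1 - eps) < (w2 - eps / dl) / (w2 - eps).
  rewrite ltr_pdivrMr // mulrAC ltr_pdivlMr //.
  set a := eps / dl in he1 hw1 *.
  nra.
have := gt0_ltr_powR (expo_gt0 hid) (ltW b1) (ltW (lt_trans b1 b12)) b12.
rewrite /g => hp.
by rewrite ltr_pM2r.
Qed.

Lemma g_i (dl w : R) (i1 i2 : nat) :
  0 < dl < 1 -> eps / dl < w -> (1 <= i1)%N -> (i1 < i2)%N -> (i2 <= d)%N ->
  g d eps dl w i2 < g d eps dl w i1.
Proof.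
move=> /andP[h0 h1] hw hi1 hi12 hi2.
have he1 : eps < eps / dl by rewrite ltr_pdivlMr // gtr_pMr.
have hwe : 0 < w - eps by rewrite subr_gt0 (lt_trans he1).
have b1 : 0 < (w - eps / dl) / (w - eps) by rewrite divr_gt0 // subr_gt0.
have b2 : (w - eps / dl) / (w - eps) < 1.
  by rewrite ltr_pdivrMr // mul1r ltrD2l ltrN2.
rewrite /g ltr_pM2r // /powR gt_eqF // ltr_expR ltr_nM2r; last first.
  by rewrite ln_lt0 // b1 b2.
rewrite !div1r ltf_pV2 ?posrE ?ltr0n ?subn_gt0 ?ltnS //; last first.
  exact: leq_trans (ltnW hi12) hi2.
rewrite ltr_nat ltn_sub2l // ltnS; exact: leq_trans (ltnW hi12) hi2.
Qed.

End G.

Theorem mainTheorem1 (R : realType) (d : nat) (eps : R) :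
  0 < eps < 1 ->
  (forall (P : box R) (j : nat),
     decomposed d eps P j ->
     eps < delta d eps P j * W d P ->
     forall i : nat, (j <= i <= d)%N ->
       decomposed d eps (child d eps P j i) i /\
       delta d eps (child d eps P j i) i =
         ((W d P - eps / delta d eps P j) / (W d P - eps))
           `^ (1 / (d.+1 - i)%:R) * delta d eps P j)
  /\
  (forall (dl1 dl2 w : R) (i : nat),
     0 < dl1 -> dl1 < dl2 -> dl2 < 1 -> eps / dl1 < w -> (1 <= i <= d)%N ->
     g d eps dl1 w i < g d eps dl2 w i)
  /\
  (forall (dl w1 w2 : R) (i : nat),
     0 < dl < 1 -> eps / dl < w1 -> w1 < w2 -> (1 <= i <= d)%N ->
     g d eps dl w1 i < g d eps dl w2 i)
  /\
  (forall (dl w : R) (i1 i2 : nat),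
     0 < dl < 1 -> eps / dl < w -> (1 <= i1)%N -> (i1 < i2)%N -> (i2 <= d)%N ->
     g d eps dl w i2 < g d eps dl w i1).
Proof.
move=> /andP[e0 e1]; split; last split; last split.
- move=> P j [hg hj hW] hdW i /andP[hji hid].
  have [_ /(_ (proj2 (andP hj))) hinv] := gen_inv hg.
  have hj' : (j <= i <= d)%N by rewrite hji hid.
  split; last exact: delta_child.
  split.
  + apply: gen_child => //; first by case/andP: hj.
    by rewrite hji (leq_trans hid).
  + by rewrite (leq_trans _ hji) //; case/andP: hj.
  + by rewrite (W_child hj hinv hW hj').
- exact: g_dl.
- exact: g_w.
- exact: g_i.
Qed.
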